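(* Let $M$ be a complete pointed metric space and let $\varphi_1,\dots,\varphi_n$ be non-negative Lipschitz functions on $M$ with bounded support such that $\varphi_1+\cdots+\varphi_n=1$ on $M$. Suppose $A_1,\dots,A_n$ are subsets of $M$ each containing the base point, with $\mathrm{supp}(\varphi_k)\subset A_k$ for all $k$. Then $\mathcal{F}(M)$ is isomorphic to a complemented subspace of $\mathcal{F}(A_1)\oplus\cdots\oplus\mathcal{F}(A_n)$.
   Context: For a pointed metric space $(M,d)$ with base point $0$, ${\mathrm{Lip}}_0(M)$ is the Banach space of Lipschitz $f:M\to\mathbb{R}$ with $f(0)=0$, normed by the Lipschitz constant. The Lipschitz-free space $\mathcal{F}(M)$ is the closed linear span in ${\mathrm{Lip}}_0(M)^*$ of the evaluation functionals $\delta(x)$, $x\in M$. For a subset $A\subseteq M$ containing the base point, $\mathcal{F}(A)$ (with the restricted metric) is identified isometrically with the closed linear span of $\delta(A)$ in $\mathcal{F}(M)$. The direct sum is any finite direct sum of Banach spaces (all such norms are equivalent). *)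

(* Defs.v *)
From mathcomp Require Import all_boot all_order all_algebra.
From mathcomp Require Import reals.
Set Implicit Arguments. Unset Strict Implicit. Unset Printing Implicit Defensive.
Import Order.TTheory GRing.Theory Num.Theory.
Local Open Scope ring_scope.

Section LipschitzFree.
Variables (R : realType) (T : Type) (d : T -> T -> R) (x0 : T).

Definition is_metric : Prop :=
  [/\ forall x y, 0 <= d x y,
      forall x y, d x y = 0 <-> x = y,
      forall x y, d x y = d y x
    & forall x y z, d x z <= d x y + d y z].

Definition cauchy_seq (u : nat -> T) : Prop :=
  forall e, 0 < e -> exists N, forall m p, (N <= m)%N -> (N <= p)%N -> d (u m) (u p) < e.

Definition converges_to (u : nat -> T) (x : T) : Prop :=
  forall e, 0 < e -> exists N, forall m, (N <= m)%N -> d (u m) x < e.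

Definition mcomplete : Prop :=
  forall u, cauchy_seq u -> exists x, converges_to u x.

Definition lipschitz_with (L : R) (f : T -> R) : Prop :=
  forall x y, `|f x - f y| <= L * d x y.

Definition lipschitzf (f : T -> R) : Prop := exists L, lipschitz_with L f.

Definition mclosure (S : T -> Prop) (x : T) : Prop :=
  forall e, 0 < e -> exists y, S y /\ d x y < e.

Definition fsupport (f : T -> R) : T -> Prop := mclosure (fun x => f x <> 0).

Definition bounded_set (S : T -> Prop) : Prop :=
  exists r, forall x, S x -> d x0 x <= r.

Definition lip0 (f : T -> R) : Prop := lipschitzf f /\ f x0 = 0.

(** elements of the algebraic dual of Lip_0(M) are represented by
    arbitrary maps (T -> R) -> R; only their values on Lip_0(M) matter. *)
Definition functional := (T -> R) -> R.

Definition feq (mu nu : functional) : Prop := forall f, lip0 f -> mu f = nu f.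

Definition normbound (mu : functional) (c : R) : Prop :=
  forall f L, 0 <= L -> lipschitz_with L f -> f x0 = 0 -> `|mu f| <= c * L.

Definition lincomb (a : R) (mu nu : functional) : functional :=
  fun f => a * mu f + nu f.

Definition fcomb (m : nat) (a : 'I_m -> R) (x : 'I_m -> T) : functional :=
  fun f => \sum_(i < m) a i * f (x i).

(** F(A) = closed linear span of delta(A) in Lip_0(M)^* *)
Definition free_space (A : T -> Prop) (mu : functional) : Prop :=
  forall e, 0 < e -> exists (m : nat) (a : 'I_m -> R) (x : 'I_m -> T),
    (forall i, A (x i)) /\
    normbound (fun f => mu f - fcomb a x f) e.

Definition FM : functional -> Prop := free_space (fun _ => True).

(** the direct sum F(A_1) (+) ... (+) F(A_n), with the l1 norm *)
Definition dsum_mem (n : nat) (A : 'I_n -> T -> Prop) (nu : 'I_n -> functional) : Prop :=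
  forall k, free_space (A k) (nu k).

Definition dsum_feq (n : nat) (nu nu' : 'I_n -> functional) : Prop :=
  forall k, feq (nu k) (nu' k).

Definition dsum_normbound (n : nat) (nu : 'I_n -> functional) (c : R) : Prop :=
  exists cs : 'I_n -> R, (forall k, normbound (nu k) (cs k)) /\ \sum_(k < n) cs k <= c.

Definition dsum_lincomb (n : nat) (a : R) (nu nu' : 'I_n -> functional) : 'I_n -> functional :=
  fun k => lincomb a (nu k) (nu' k).

(** F(M) is isomorphic to a complemented subspace of (+)_k F(A_k):
    there are bounded linear J : F(M) -> (+)_k F(A_k) and
    P : (+)_k F(A_k) -> F(M) with P o J = id_{F(M)}. *)
Definition iso_complemented_in_dsum (n : nat) (A : 'I_n -> T -> Prop) : Prop :=
  exists (J : functional -> 'I_n -> functional) (P : ('I_n -> functional) -> functional),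
  [/\
      [/\ forall mu, FM mu -> dsum_mem A (J mu),
          forall a mu nu, FM mu -> FM nu ->
            dsum_feq (J (lincomb a mu nu)) (dsum_lincomb a (J mu) (J nu))
        & exists C, 0 <= C /\ forall mu c, FM mu -> normbound mu c ->
            dsum_normbound (J mu) (C * c)],
      [/\ forall nu, dsum_mem A nu -> FM (P nu),
          forall a nu nu', dsum_mem A nu -> dsum_mem A nu' ->
            feq (P (dsum_lincomb a nu nu')) (lincomb a (P nu) (P nu'))
        & exists C, 0 <= C /\ forall nu c, dsum_mem A nu -> dsum_normbound nu c ->
            normbound (P nu) (C * c)]
    &
      forall mu, FM mu -> feq (P (J mu)) mu].

End LipschitzFree.

(* Main.v *)
Require Import Defs.
From mathcomp Require Import all_boot all_order all_algebra.
From mathcomp Require Import reals.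
From mathcomp Require Import ring lra.
From Stdlib Require Import FunctionalExtensionality ClassicalEpsilon.
Import Order.TTheory GRing.Theory Num.Theory.
Local Open Scope ring_scope.

Lemma fin_choice (R : realType) m (P : 'I_m -> R -> Prop) :
  (forall k, exists L, P k L) -> exists L : 'I_m -> R, forall k, P k (L k).
Proof.
move=> h; exists (fun k => proj1_sig (constructive_indefinite_description _ (h k))).
by move=> k; exact: proj2_sig (constructive_indefinite_description _ (h k)).
Qed.

Lemma small_zero (R : realType) (x K : R) : 0 <= K ->
  (forall e, 0 < e -> `|x| <= e * K) -> x = 0.
Proof.
move=> K0 h; apply/eqP; apply/negP => /negP hx.
have ax : 0 < `|x| by rewrite normr_gt0.
have K1 : 0 < K + 1 by lra.
have := h (`|x| / (K + 1)) (divr_gt0 ax K1).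
rewrite mulrAC ler_pdivlMr //; nra.
Qed.

Section Aux.
Variables (R : realType) (T : Type) (d : T -> T -> R) (x0 : T).
Hypothesis hd : is_metric d.

Lemma d_ge0 x y : 0 <= d x y. Proof. by case: hd. Qed.
Lemma d_refl x : d x x = 0. Proof. by case: hd => _ h _ _; apply/h. Qed.
Lemma d_sym x y : d x y = d y x. Proof. by case: hd. Qed.

Lemma lip_nonneg L f : lipschitz_with d L f -> lipschitz_with d (Num.max L 0) f.
Proof.
move=> h x y; apply: (le_trans (h x y)); apply: ler_wpM2r; first exact: d_ge0.
by rewrite le_max lexx.
Qed.

Lemma lipf_nonneg f : lipschitzf d f -> exists L, 0 <= L /\ lipschitz_with d L f.
Proof.
case=> L hL; exists (Num.max L 0); split; last exact: lip_nonneg.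
by rewrite le_max lexx orbT.
Qed.

Lemma fcomb_sum m (a : 'I_m -> R) (x : 'I_m -> T) p (g : 'I_p -> T -> R) :
  fcomb a x (fun y => \sum_(k < p) g k y) = \sum_(k < p) fcomb a x (g k).
Proof.
rewrite /fcomb; under eq_bigr => i _ do rewrite mulr_sumr.
by rewrite exchange_big.
Qed.

Lemma FM_additive mu m (g : 'I_m -> T -> R) : FM d x0 mu ->
  (forall k, lip0 d x0 (g k)) ->
  mu (fun y => \sum_(k < m) g k y) = \sum_(k < m) mu (g k).
Proof.
move=> hmu hg.
have [L hL] : exists L : 'I_m -> R, forall k, 0 <= L k /\ lipschitz_with d (L k) (g k).
  by apply: (@fin_choice R m (fun k L => 0 <= L /\ lipschitz_with d L (g k))) => k; apply: lipf_nonneg; case: (hg k).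
set G := fun y => \sum_(k < m) g k y.
have SL0 : 0 <= \sum_(k < m) L k by apply: sumr_ge0 => k _; case: (hL k).
have hG : lipschitz_with d (\sum_(k < m) L k) G.
  move=> x y; rewrite /G -sumrB mulr_suml.
  apply: (le_trans (ler_norm_sum _ _ _)); apply: ler_sum => k _.
  by case: (hL k) => _; apply.
have G0 : G x0 = 0 by rewrite /G big1 // => k _; case: (hg k).
apply/eqP; rewrite -subr_eq0; apply/eqP.
apply: (@small_zero R _ (\sum_(k < m) L k + \sum_(k < m) L k)); first lra.
move=> e e0; have [p [a [x [_ hb]]]] := hmu e e0.
have -> : mu G - \sum_(k < m) mu (g k) =
  (mu G - fcomb a x G) - \sum_(k < m) (mu (g k) - fcomb a x (g k)).
  by rewrite sumrB /G fcomb_sum; ring.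
apply: (le_trans (ler_normB _ _)); rewrite mulrDr; apply: lerD.
  exact: hb.
apply: (le_trans (ler_norm_sum _ _ _)); rewrite mulr_sumr; apply: ler_sum => k _.
case: (hL k) => l0 hl; apply: hb => //; by case: (hg k).
Qed.

Lemma FM_zero : FM d x0 (fun _ => 0).
Proof.
move=> e e0; exists 0%N, (fun _ => 0), (fun _ => x0); split => // f L L0 _ _.
by rewrite /fcomb big_ord0 subr0 normr0; apply: mulr_ge0 => //; apply: ltW.
Qed.

Lemma FM_add mu nu : FM d x0 mu -> FM d x0 nu -> FM d x0 (fun f => mu f + nu f).
Proof.
move=> hm hn e e0.
have e2 : 0 < e / 2 by apply: divr_gt0.
have [m1 [a1 [x1 [_ h1]]]] := hm _ e2.
have [m2 [a2 [x2 [_ h2]]]] := hn _ e2.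
exists (m1 + m2)%N,
  (fun i => match split i with inl j => a1 j | inr j => a2 j end),
  (fun i => match split i with inl j => x1 j | inr j => x2 j end).
split => // f L L0 hf f0.
have -> : fcomb (fun i => match split i with inl j => a1 j | inr j => a2 j end)
   (fun i => match split i with inl j => x1 j | inr j => x2 j end) f
   = fcomb a1 x1 f + fcomb a2 x2 f.
  rewrite /fcomb big_split_ord /=; congr (_ + _); apply: eq_bigr => i _.
    by rewrite (unsplitK (inl _ i)).
  by rewrite (unsplitK (inr _ i)).
have := h1 f L L0 hf f0; have := h2 f L L0 hf f0.
set u := mu f - _; set v := nu f - _ => hv hu.
have -> : mu f + nu f - (fcomb a1 x1 f + fcomb a2 x2 f) = u + v by rewrite /u /v; ring.
apply: (le_trans (ler_normD _ _)).
have -> : e * L = e / 2 * L + e / 2 * L by field.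
exact: lerD.
Qed.

Lemma FM_sum m (g : 'I_m -> (T -> R) -> R) : (forall k, FM d x0 (g k)) ->
  FM d x0 (fun f => \sum_(k < m) g k f).
Proof.
elim: m g => [|m IH] g hg.
  have -> : (fun f => \sum_(k < 0) g k f) = (fun _ => 0).
    by apply: functional_extensionality => f; rewrite big_ord0.
  exact: FM_zero.
have -> : (fun f => \sum_(k < m.+1) g k f) =
  (fun f => \sum_(k < m) g (widen_ord (leqnSn m) k) f + g ord_max f).
  by apply: functional_extensionality => f; rewrite big_ord_recr.
apply: FM_add => //; exact: IH.
Qed.

Lemma prod_lip (phi : T -> R) Lp r : 0 <= Lp -> 0 <= r -> lipschitz_with d Lp phi ->
  (forall x, phi x <> 0 -> d x0 x <= r) ->
  forall f L, 0 <= L -> lipschitz_with d L f -> f x0 = 0 ->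
  lipschitz_with d ((Lp * r + `|phi x0| + r * Lp) * L) (fun y => phi y * f y).
Proof.
move=> Lp0 r0 hp hs f L L0 hf f0.
have hB : forall y, `|phi y| <= Lp * r + `|phi x0|.
  move=> y; case: (eqVneq (phi y) 0) => [->|hy].
    rewrite normr0; apply: addr_ge0 => //; exact: mulr_ge0.
  have -> : phi y = (phi y - phi x0) + phi x0 by ring.
  apply: (le_trans (ler_normD _ _)); apply: lerD => //.
  apply: (le_trans (hp y x0)); rewrite d_sym; apply: ler_wpM2l => //.
  by apply: hs; apply/eqP.
have key : forall x y, phi x <> 0 ->
    `|phi x * f x - phi y * f y| <= (Lp * r + `|phi x0| + r * Lp) * L * d x y.
  move=> x y hx.
  have -> : phi x * f x - phi y * f y = phi y * (f x - f y) + f x * (phi x - phi y) by ring.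
  apply: (le_trans (ler_normD _ _)); rewrite !normrM.
  have h1 := hB y.
  have h2 := hf x y.
  have h3 : `|f x| <= L * r.
    rewrite -[f x]subr0 -f0; apply: (le_trans (hf x x0)); rewrite d_sym.
    by apply: ler_wpM2l => //; apply: hs.
  have h4 := hp x y.
  have n1 := normr_ge0 (phi y); have n2 := normr_ge0 (f x - f y).
  have n3 := normr_ge0 (f x); have n4 := normr_ge0 (phi x - phi y).
  have n5 := d_ge0 x y.
  have p1 : `|phi y| * `|f x - f y| <= (Lp * r + `|phi x0|) * (L * d x y)
    by apply: ler_pM.
  have p2 : `|f x| * `|phi x - phi y| <= (L * r) * (Lp * d x y)
    by apply: ler_pM.
  have -> : (Lp * r + `|phi x0| + r * Lp) * L * d x y =
    (Lp * r + `|phi x0|) * (L * d x y) + (L * r) * (Lp * d x y) by ring.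
  exact: lerD.
move=> x y /=.
case: (eqVneq (phi x) 0) => [hx|hx]; last by apply: key; apply/eqP.
case: (eqVneq (phi y) 0) => [hy|hy].
  rewrite hx hy !mul0r subrr normr0; apply: mulr_ge0; last exact: d_ge0.
  apply: mulr_ge0 => //; apply: addr_ge0; [apply: addr_ge0 => //; exact: mulr_ge0|exact: mulr_ge0].
by rewrite distrC d_sym; apply: key; apply/eqP.
Qed.

End Aux.

Theorem lemma2p4 (R : realType) (T : Type) (d : T -> T -> R) (x0 : T)
  (n : nat) (phi : 'I_n -> T -> R) (A : 'I_n -> T -> Prop) :
  is_metric d -> mcomplete d ->
  (forall k x, 0 <= phi k x) ->
  (forall k, lipschitzf d (phi k)) ->
  (forall k, bounded_set d x0 (fsupport d (phi k))) ->
  (forall x, \sum_(k < n) phi k x = 1) ->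
  (forall k, A k x0) ->
  (forall k x, fsupport d (phi k) x -> A k x) ->
  iso_complemented_in_dsum d x0 A.
Proof.
move=> hd _ _ hlip hbd hsum hA0 hsA.
have insupp : forall k x, phi k x <> 0 -> fsupport d (phi k) x.
  move=> k x hx e e0; exists x; split => //; by rewrite d_refl.
have [Lp hLp] : exists Lp : 'I_n -> R, forall k, 0 <= Lp k /\ lipschitz_with d (Lp k) (phi k).
  by apply: (@fin_choice R n (fun k L => 0 <= L /\ lipschitz_with d L (phi k))) => k; apply: lipf_nonneg.
have [r hr] : exists r : 'I_n -> R, forall k, 0 <= r k /\
    (forall x, phi k x <> 0 -> d x0 x <= r k).
  apply: (@fin_choice R n (fun k r => 0 <= r /\ (forall x, phi k x <> 0 -> d x0 x <= r))) => k; case: (hbd k) => r hr'; exists (Num.max r 0); split.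
    by rewrite le_max lexx orbT.
  move=> x hx; apply: (le_trans (hr' x (insupp k x hx))); by rewrite le_max lexx.
pose C k := (Lp k * r k + `|phi k x0| + r k * Lp k).
have C0 : forall k, 0 <= C k.
  move=> k; case: (hLp k) (hr k) => l0 _ [r0 _].
  apply: addr_ge0; [apply: addr_ge0 => //; exact: mulr_ge0|exact: mulr_ge0].
have plip : forall k f L, 0 <= L -> lipschitz_with d L f -> f x0 = 0 ->
    lipschitz_with d (C k * L) (fun y => phi k y * f y).
  move=> k f L L0 hf f0; case: (hLp k) (hr k) => l0 hl [r0 hr0].
  exact: prod_lip.
exists (fun mu k => fun f => mu (fun y => phi k y * f y)),
       (fun nu => fun f => \sum_(k < n) nu k f).
split; [split|split|].
- move=> mu hmu k e e0.
  have Ck1 : 0 < C k + 1 by have := C0 k; lra.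
  have [m [a [x [_ hb]]]] := hmu _ (divr_gt0 e0 Ck1).
  exists m, (fun i => a i * phi k (x i)),
    (fun i => if phi k (x i) == 0 then x0 else x i).
  split.
    move=> i; case: eqP => [_|hx]; first exact: hA0.
    by apply: hsA; apply: insupp.
  move=> f L L0 hf f0.
  have -> : fcomb (fun i => a i * phi k (x i))
     (fun i => if phi k (x i) == 0 then x0 else x i) f
     = fcomb a x (fun y => phi k y * f y).
    rewrite /fcomb; apply: eq_bigr => i _.
    case: eqP => [->|_]; first by rewrite !(mulr0, mul0r).
    by rewrite mulrA.
  have := hb _ (C k * L) (mulr_ge0 (C0 k) L0) (plip k f L L0 hf f0).
  rewrite f0 mulr0 => /(_ erefl) h; apply: (le_trans h).
  rewrite mulrA; apply: ler_wpM2r => //.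
  rewrite mulrAC ler_pdivrMr //; have := C0 k; nra.
- by move=> a mu nu _ _ k f _.
- exists (\sum_(k < n) C k); split; first by apply: sumr_ge0 => k _.
  move=> mu c hmu hb; exists (fun k => c * C k); split.
    move=> k f L L0 hf f0; rewrite -mulrA; apply: hb.
    + exact: mulr_ge0.
    + exact: plip.
    + by rewrite f0 mulr0.
  by rewrite -mulr_sumr mulrC.
- move=> nu hnu; apply: FM_sum => k e e0.
  have [m [a [x [_ hb]]]] := hnu k e e0.
  by exists m, a, x.
- move=> a nu nu' _ _ f _.
  by rewrite /dsum_lincomb /lincomb big_split /= mulr_sumr.
- exists 1; split; first exact: ler01.
  move=> nu c _ [cs [hcs hc]] f L L0 hf f0.
  apply: (le_trans (ler_norm_sum _ _ _)).
  apply: (le_trans (y := \sum_(k < n) cs k * L)).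
    by apply: ler_sum => k _; apply: hcs.
  by rewrite -mulr_suml mul1r; apply: ler_wpM2r.
- move=> mu hmu f [hfl f0].
  have [L [L0 hL]] := @lipf_nonneg R T d hd f hfl.
  rewrite -(@FM_additive R T d x0 hd mu n (fun k y => phi k y * f y) hmu).
    congr mu; apply: functional_extensionality => y.
    by rewrite -mulr_suml hsum mul1r.
  move=> k; split; first by exists (C k * L); exact: plip.
  by rewrite /= f0 mulr0.
Qed.
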